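(* Let $s$ be a scoring vector with all entries positive, let $k=(k_1,\ldots,k_n)$ be a vector of non-negative integers with $\sum_i k_i=m$, let $c_i=\sum_{l<i}k_l$, $k_{\min}=\min_i k_i$, and let $P$ be any preference profile. Then $$\mathcal{P}^u_{AtoP}\le\frac{\sum_{i=1}^n\sum_{j=1}^{k_i}s_j}{\sum_{j=1}^m s_j},\qquad \mathcal{P}^e_{AtoP}\le\frac{\sum_{j=1}^{k_{\min}}s_j}{\min_{i\in[n]}\sum_{j=c_i+1}^{c_i+k_i}s_j},\qquad \mathcal{P}^n_{AtoP}\le\frac{\prod_{i=1}^n\sum_{j=1}^{k_i}s_j}{\prod_{i=1}^n\sum_{j=c_i+1}^{c_i+k_i}s_j}.$$
   Context: There are $n$ agents $a_1,\ldots,a_n$ and $m$ items. A preference profile $P=(\succ_{a_1},\ldots,\succ_{a_n})$ assigns to each agent a strict ranking of the items. A scoring vector $s=(s_1,\ldots,s_m)$ satisfies $s_1\ge\cdots\ge s_m$; an agent's value for her $j$-th preferred item is $s_j$, utilities are additive. Given $k$, agent $a_1$ first picks $k_1$ items, then $a_2$ picks $k_2$ of the remaining ones, etc., each greedily picking her most preferred remaining items; $U^k_P(a)$ is the total score $a$ receives. $SW^u_P(k)=\sum_a U^k_P(a)$, $SW^e_P(k)=\min_a U^k_P(a)$, $SW^n_P(k)=\prod_a U^k_P(a)$. For a permutation $\pi$ of $[n]$, $P_\pi$ is the profile obtained from $P$ by permuting the agents' rankings according to $\pi$. The price of assignment of agents to positions is $\mathcal{P}^x_{AtoP}=\max_{\pi}SW^x_{P_\pi}(k)/\min_{\pi}SW^x_{P_\pi}(k)$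 for $x\in\{u,e,n\}$, with $\pi$ ranging over all permutations of $[n]$. *)

(* Defs.v *)
From HB Require Import structures.
From mathcomp Require Import all_boot all_order all_algebra all_fingroup.
Set Implicit Arguments. Unset Strict Implicit. Unset Printing Implicit Defensive.
Import Order.TTheory GRing.Theory Num.Theory.
Local Open Scope ring_scope.

(* Items are 'I_m, agents are 'I_n (agent a_{i+1} is index i, 0-based).
   A strict ranking of the items is a permutation sigma : {perm 'I_m},
   where sigma j is the item at (0-based) position j; the rank of item x
   is sigma^-1 x.  Scoring vector s : 'I_m -> R, s j = s_{j+1}. *)

Definition scoring_vector (R : realFieldType) (m : nat) (s : 'I_m -> R) : Prop :=
  forall i j : 'I_m, (i <= j)%N -> s j <= s i.

Definition pref_order (m : nat) (sigma : {perm 'I_m}) : seq 'I_m :=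
  [seq sigma j | j <- enum 'I_m].

Definition pick (m : nat) (sigma : {perm 'I_m}) (avail : {set 'I_m}) (k : nat)
  : seq 'I_m := take k [seq x <- pref_order sigma | x \in avail].

Fixpoint alloc (m : nat) (avail : {set 'I_m}) (l : seq ({perm 'I_m} * nat))
  : seq (seq 'I_m) :=
  match l with
  | [::] => [::]
  | (sigma, k) :: l' =>
      let p := pick sigma avail k in
      p :: alloc (avail :\: [set x in p]) l'
  end.

Definition utility (R : realFieldType) (n m : nat) (s : 'I_m -> R)
  (k : 'I_n -> nat) (P : 'I_n -> {perm 'I_m}) (i : 'I_n) : R :=
  \sum_(x <- nth [::] (alloc setT [seq (P a, k a) | a <- enum 'I_n]) i)
     s ((P i)^-1 x)%g.

(* minimum / maximum of a list (0 on the empty list; only used on nonempty lists) *)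
Definition seqmin (R : realFieldType) (l : seq R) : R := foldr Num.min (head 0 l) l.
Definition seqmax (R : realFieldType) (l : seq R) : R := foldr Num.max (head 0 l) l.
Definition seqminn (l : seq nat) : nat := foldr minn (head 0%N l) l.

Definition SW_u (R : realFieldType) n m (s : 'I_m -> R) k P : R :=
  \sum_(i < n) utility s k P i.
Definition SW_e (R : realFieldType) n m (s : 'I_m -> R) k P : R :=
  seqmin [seq utility s k P i | i <- enum 'I_n].
Definition SW_n (R : realFieldType) n m (s : 'I_m -> R) k P : R :=
  \prod_(i < n) utility s k P i.

Definition permute_profile (n m : nat) (P : 'I_n -> {perm 'I_m}) (pi : {perm 'I_n})
  : 'I_n -> {perm 'I_m} := fun i => P (pi i).

Definition price_AtoP (R : realFieldType) n m
  (SW : ('I_n -> {perm 'I_m}) -> R) (P : 'I_n -> {perm 'I_m}) : R :=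
  seqmax [seq SW (permute_profile P pi) | pi <- enum {perm 'I_n}] /
  seqmin [seq SW (permute_profile P pi) | pi <- enum {perm 'I_n}].

Definition cpos (n : nat) (k : 'I_n -> nat) (i : 'I_n) : nat :=
  (\sum_(l < n | (l < i)%N) k l)%N.

(* Main.v *)
Set Warnings "-all".
Require Import Defs.
From HB Require Import structures.
From mathcomp Require Import all_boot all_order all_algebra all_fingroup.
From mathcomp Require Import zify.
Set Warnings "-all".
Import Order.TTheory GRing.Theory Num.Theory.
Local Open Scope ring_scope.

Section Aux.
Variables (R : realFieldType) (m : nat) (s : 'I_m -> R).
Hypothesis sv : scoring_vector s.
Hypothesis spos : forall j, 0 < s j.

Definition S (t : nat) : R := if insub t is Some j then s j else 0.

Lemma S_val (j : 'I_m) : S (val j) = s j.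
Proof. by rewrite /S valK. Qed.

Lemma S_out t : (m <= t)%N -> S t = 0.
Proof. by move=> h; rewrite /S insubF // ltnNge h. Qed.

Lemma S_ge0 t : 0 <= S t.
Proof. by rewrite /S; case: insub => // j; exact: ltW. Qed.

Lemma S_mono a b : (a <= b)%N -> S b <= S a.
Proof.
move=> ab; case: (ltnP b m) => hb; last by rewrite S_out // S_ge0.
have ha : (a < m)%N by apply: leq_ltn_trans hb.
change (S (val (Ordinal hb)) <= S (val (Ordinal ha))); rewrite !S_val; exact: sv.
Qed.

Lemma up_sorted (L : seq nat) a : sorted ltn L -> all (leq a) L ->
  \sum_(t <- L) S t <= \sum_(t < size L) S (a + t)%N.
Proof.
elim: L a => [|x L IH] a /=; first by rewrite big_nil big_ord0.
move=> Hs /andP[ax Ha]; rewrite big_cons big_ord_recl /=.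
apply: lerD; first by rewrite addn0; apply: S_mono.
apply: le_trans (IH x.+1 (path_sorted Hs) _) _.
  exact: (order_path_min ltn_trans Hs).
apply: ler_sum => t _; apply: S_mono; rewrite /bump /=; lia.
Qed.

Lemma low_sorted (L : seq nat) N : sorted gtn L -> all (gtn N) L ->
  \sum_(t < size L) S (N.-1 - t)%N <= \sum_(t <- L) S t.
Proof.
elim: L N => [|x L IH] N /=; first by rewrite big_nil big_ord0.
move=> Hs /andP[xN Ha]; rewrite big_cons big_ord_recl /=.
apply: lerD; first by apply: S_mono; rewrite /gtn /= in xN; lia.
apply: le_trans (IH x (path_sorted Hs) _).
  apply: ler_sum => t _; apply: S_mono; rewrite /bump /=; rewrite /gtn /= in xN; lia.
apply: (order_path_min _ Hs) => p q r /= h1 h2; exact: ltn_trans h2 h1.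
Qed.

Lemma shift_nat (F : nat -> R) a b c :
  \sum_((a + b)%N <= j < (a + c)%N) F j = \sum_(b <= j < c) F (a + j)%N.
Proof. by rewrite /index_iota subnDl iotaDl big_map. Qed.

Lemma shift0 (F : nat -> R) a c :
  \sum_(a <= j < (a + c)%N) F j = \sum_(0 <= j < c) F (a + j)%N.
Proof. by rewrite -shift_nat addn0. Qed.

Lemma part (F : nat -> R) ks :
  \sum_(0 <= t < size ks)
     \sum_(sumn (take t ks) <= j < (sumn (take t ks) + nth 0%N ks t)%N) F j
  = \sum_(0 <= j < sumn ks) F j.
Proof.
elim: ks F => [|a ks IH] F /=; first by rewrite !big_geq.
rewrite big_nat_recl //= add0n.
rewrite [in RHS](big_cat_nat (n := a)) ?leq_addr //=; congr (_ + _).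
rewrite [in RHS]shift0; have /= <- := IH (fun j => F (a + j)%N).
apply: eq_bigr => t _; by rewrite -addnA shift_nat.
Qed.

Lemma convG (P : pred nat) M : (m <= M)%N ->
  \sum_(j < m | P j) s j = \sum_(0 <= t < M | P t) S t.
Proof.
move=> hM; rewrite (big_cat_nat (n:=m)) //=.
rewrite [X in _ + X]big_nat_cond [X in _ + X]big1 ?addr0; last first.
  by move=> t /andP[/andP[ht _] _]; apply: S_out.
by rewrite big_mkord; apply: eq_bigr => j _; rewrite S_val.
Qed.

Lemma convT k : \sum_(j < m | (j < k)%N) s j = \sum_(0 <= t < k) S t.
Proof.
rewrite (convG (fun j => j < k)%N (m + k)%N) ?leq_addr //.
by rewrite [RHS](big_nat_widen _ _ (m + k)%N) ?leq_addl.
Qed.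

Lemma convL c k : (c + k <= m)%N ->
  \sum_(j < m | (c <= j < c + k)%N) s j = \sum_(c <= t < (c + k)%N) S t.
Proof.
move=> hm; rewrite (convG (fun j => c <= j < c + k)%N m) // (big_cat_nat (n:=c)) ?leq0n //=; last lia.
rewrite [X in X + _]big_nat_cond [X in X + _]big1 ?add0r; last first.
  by move=> t /andP[/andP[_ ht] /andP[h _]]; move: ht h; lia.
rewrite [RHS](big_nat_widen _ _ m) // [LHS]big_nat_cond [RHS]big_nat_cond.
apply: eq_bigl => t; apply/idP/idP; move/andP => [/andP[h1 h2] h3]; rewrite h1 h2 //=; move: h3 => /=; lia.
Qed.

Lemma revL c k :
  \sum_(t < k) S ((c + k).-1 - t)%N = \sum_(c <= t < (c + k)%N) S t.
Proof.
rewrite [RHS]big_nat_rev [RHS]shift0 -(big_mkord (fun _ => true) (fun t => S ((c + k).-1 - t)%N)).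
apply: eq_big_nat => t /andP[_ ht]; congr S; lia.
Qed.

Section Pick.
Variables (sigma : {perm 'I_m}) (A : {set 'I_m}) (k : nat).
Let L := [seq val j | j <- take k [seq j <- enum 'I_m | sigma j \in A]].

Lemma pick_sum : \sum_(x <- Defs.pick sigma A k) s ((sigma^-1)%g x) = \sum_(t <- L) S t.
Proof.
rewrite /Defs.pick /pref_order filter_map -map_take big_map /L big_map.
by apply: eq_bigr => j _; rewrite permK S_val.
Qed.

Lemma sorted_L : sorted ltn L.
Proof.
rewrite /L sorted_map; apply: take_sorted; apply: sorted_filter.
  by move=> x y z; exact: ltn_trans.
by rewrite -sorted_map val_enum_ord iota_ltn_sorted.
Qed.

Lemma size_L : (size L <= k)%N.
Proof. by rewrite /L size_map size_take; case: ifP => // /negbT; rewrite -leqNgt. Qed.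

Lemma full_L c : (#|~: A| <= c)%N -> (c + k <= m)%N ->
  size L = k /\ all (gtn (c + k)) L.
Proof.
move=> hA hm.
set Pp := (fun j => sigma j \in A).
set e := enum 'I_m.
set N := (c + k)%N.
have hcnt : (count (predC Pp) e <= c)%N.
  suff -> : count (predC Pp) e = #|~: A| by [].
  rewrite -(card_preimset (~: A) (@perm_inj _ sigma)).
  rewrite cardE /enum_mem size_filter /e enumT; apply: eq_count => x.
  by rewrite !inE.
have hsz : size (take N e) = N by rewrite size_takel // size_enum_ord.
have hcntN : (k <= count Pp (take N e))%N.
  have := count_predC Pp (take N e).
  have : (count (predC Pp) (take N e) <= count (predC Pp) e)%N.
    by rewrite -{2}(cat_take_drop N e) count_cat leq_addr.
  rewrite hsz; lia.
have htake : take k [seq j <- e | Pp j] = take k [seq j <- take N e | Pp j].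
  by rewrite -{1}(cat_take_drop N e) filter_cat takel_cat // size_filter.
rewrite /L -/e htake; split; first by rewrite size_map size_takel // size_filter.
apply/allP => t /mapP [j hj ->]; have := mem_take hj; rewrite mem_filter.
move=> /andP[_ hjN]; have := map_f val hjN.
rewrite map_take val_enum_ord take_iota mem_iota /gtn /=; lia.
Qed.

Lemma pick_up : \sum_(x <- Defs.pick sigma A k) s ((sigma^-1)%g x)
  <= \sum_(j < m | (j < k)%N) s j.
Proof.
rewrite pick_sum convT.
apply: le_trans (up_sorted L 0%N sorted_L _) _; first by apply/allP.
rewrite -(big_mkord (fun _ => true) (fun t => S (0 + t)%N)).
rewrite (big_cat_nat (n := size L) (m := 0%N) (p := k)) //=; last exact: size_L.
by rewrite lerDl sumr_ge0 // => t _; apply: S_ge0.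
Qed.

Lemma pick_low c : (#|~: A| <= c)%N -> (c + k <= m)%N ->
  \sum_(j < m | (c <= j < c + k)%N) s j
  <= \sum_(x <- Defs.pick sigma A k) s ((sigma^-1)%g x).
Proof.
move=> hA hm; have [sz al] := full_L c hA hm.
rewrite pick_sum convL // -revL.
have hp : perm_eq (rev L) L by rewrite (perm_rev L) perm_refl.
rewrite -(perm_big _ hp).
have := low_sorted (rev L) (c + k) _ _; rewrite size_rev sz; apply.
  by rewrite rev_sorted sorted_L.
by rewrite all_rev.
Qed.

End Pick.
End Aux.
Arguments S {R m}.
Arguments S_val {R m}.
Arguments S_ge0 {R m}.

Lemma alloc_nth m (l : seq ({perm 'I_m} * nat)) (avail : {set 'I_m}) i :
  (i < size l)%N ->
  exists A : {set 'I_m},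
    nth [::] (alloc avail l) i
      = Defs.pick (nth (1%g, 0%N) l i).1 A (nth (1%g, 0%N) l i).2
    /\ (#|avail :\: A| <= sumn (take i (map snd l)))%N.
Proof.
elim: l avail i => [|[sg kk] l IH] avail [|i] //= hi.
  by exists avail; rewrite setDv cards0.
have [A [eA hA]] := IH (avail :\: [set x in Defs.pick sg avail kk]) i hi.
exists A; split => //.
set av' := avail :\: _ in hA.
have h1 : avail :\: A \subset (avail :\: av') :|: (av' :\: A).
  apply/subsetP => x; rewrite !inE.
  by case: (x \in A); case: (x \in avail); case: (x \in Defs.pick sg avail kk).
have h2 : (#|avail :\: av'| <= kk)%N.
  apply: (@leq_trans #|[set x in Defs.pick sg avail kk]|).
    apply: subset_leq_card; apply/subsetP => x; rewrite !inE.
    by case: (x \in Defs.pick sg avail kk); case: (x \in avail).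
  rewrite cardsE; apply: leq_trans (card_size _) _.
  by rewrite size_take; case: ifP => // /negbT; rewrite -leqNgt.
apply: leq_trans (subset_leq_card h1) _.
apply: leq_trans (leq_card_setU _ _) _; lia.
Qed.

Section Seq.
Variable R : realFieldType.

Lemma foldmin_le (l : seq R) h x : x \in l -> foldr Num.min h l <= x.
Proof.
elim: l => //= y l IH; rewrite inE => /orP[/eqP->|hx]; rewrite ge_min.
  by rewrite lexx.
by rewrite IH ?orbT.
Qed.

Lemma foldmin_ge (l : seq R) h d : d <= h -> (forall x, x \in l -> d <= x) ->
  d <= foldr Num.min h l.
Proof.
move=> hh; elim: l => //= y l IH hl; rewrite le_min hl ?mem_head // IH //.
by move=> x hx; apply: hl; rewrite inE hx orbT.
Qed.

Lemma foldmin_mem (l : seq R) h : foldr Num.min h l \in h :: l.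
Proof.
elim: l => [|y l IH] /=; first by rewrite mem_head.
case: leP => _; first by rewrite !inE eqxx orbT.
by move: IH; rewrite !inE => /orP[->|->]; rewrite ?orbT.
Qed.

Lemma foldmax_le (l : seq R) h x : x \in l -> x <= foldr Num.max h l.
Proof.
elim: l => //= y l IH; rewrite inE => /orP[/eqP->|hx]; rewrite le_max.
  by rewrite lexx.
by rewrite IH ?orbT.
Qed.

Lemma foldmax_ge (l : seq R) h c : h <= c -> (forall x, x \in l -> x <= c) ->
  foldr Num.max h l <= c.
Proof.
move=> hh; elim: l => //= y l IH hl; rewrite ge_max hl ?mem_head // IH //.
by move=> x hx; apply: hl; rewrite inE hx orbT.
Qed.

Lemma head_mem (l : seq R) x0 : x0 \in l -> head 0 l \in l.
Proof. by case: l => //= y l _; rewrite mem_head. Qed.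

Lemma seqmin_le (l : seq R) x : x \in l -> seqmin l <= x.
Proof. exact: foldmin_le. Qed.

Lemma seqmin_ge (l : seq R) x0 d : x0 \in l -> (forall x, x \in l -> d <= x) ->
  d <= seqmin l.
Proof. by move=> h0 hl; apply: foldmin_ge => //; apply/hl/head_mem/h0. Qed.

Lemma seqmin_mem (l : seq R) x0 : x0 \in l -> seqmin l \in l.
Proof.
move=> h0; have := foldmin_mem l (head 0 l); rewrite /seqmin inE.
by case/orP => // /eqP ->; apply: head_mem h0.
Qed.

Lemma seqmax_ge (l : seq R) x : x \in l -> x <= seqmax l.
Proof. exact: foldmax_le. Qed.

Lemma seqmax_le (l : seq R) x0 c : x0 \in l -> (forall x, x \in l -> x <= c) ->
  seqmax l <= c.
Proof. by move=> h0 hl; apply: foldmax_ge => //; apply/hl/head_mem/h0. Qed.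

Lemma price_le (l : seq R) x0 c d : x0 \in l ->
  (forall v, v \in l -> d <= v <= c) -> 0 <= d -> (d = 0 -> c = 0) ->
  seqmax l / seqmin l <= c / d.
Proof.
move=> hx hb hd hdc.
have hmin : d <= seqmin l by apply: (@seqmin_ge l x0 d hx) => v /hb /andP[].
have hmax : seqmax l <= c by apply: (@seqmax_le l x0 c hx) => v /hb /andP[].
have hmax0 : 0 <= seqmax l.
  apply: le_trans hd _; apply: le_trans (@seqmax_ge l x0 hx).
  by have /andP[] := hb _ hx.
case: (eqVneq d 0) => [d0|dn0].
  have c0 := hdc d0.
  have -> : seqmax l = 0 by apply/eqP; rewrite eq_le hmax0 -c0 hmax.
  by rewrite c0 !mul0r.
have dp : 0 < d by rewrite lt_def dn0 hd.
have mp : 0 < seqmin l := lt_le_trans dp hmin.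
have c0 : 0 <= c := le_trans hmax0 hmax.
rewrite ler_pdivrMr //; apply: le_trans hmax _.
rewrite -{1}(divfK dn0 c) ler_wpM2l //; by rewrite divr_ge0.
Qed.

End Seq.

Lemma seqminn_le (l : seq nat) x : x \in l -> (seqminn l <= x)%N.
Proof.
rewrite /seqminn; elim: l (head 0%N l) => //= y l IH h.
rewrite inE => /orP[/eqP->|hx]; first exact: geq_minl.
exact: leq_trans (geq_minr _ _) (IH h hx).
Qed.

Lemma foldminn_mem (l : seq nat) h : foldr minn h l \in h :: l.
Proof.
elim: l => [|z l IH]; first by rewrite /= mem_head.
change (minn z (foldr minn h l) \in [:: h, z & l]).
case: (leqP z (foldr minn h l)) => hh.
  by rewrite !inE eqxx orbT.
move: IH; rewrite !inE.
by case/orP => ->; rewrite ?orbT.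
Qed.

Lemma seqminn_mem (l : seq nat) : l != [::] -> seqminn l \in l.
Proof.
rewrite /seqminn; case: l => // y l _.
change (minn y (foldr minn y l) \in y :: l).
have := foldminn_mem l y.
case: (leqP y (foldr minn y l)) => hh.
  by rewrite mem_head.
by [].
Qed.

Lemma sumn_take_big (l : seq nat) i :
  sumn (take i l) = (\sum_(0 <= t < i) nth 0 l t)%N.
Proof.
elim: l i => [|x l IH] [|i]; try by rewrite big_geq.
  by rewrite big1 // => t _; rewrite nth_nil.
by rewrite big_nat_recl //= IH.
Qed.

Section Model.
Variables (R : realFieldType) (n m : nat) (s : 'I_m -> R) (k : 'I_n -> nat).
Hypotheses (sv : scoring_vector s) (spos : forall j, 0 < s j)
  (hsum : (\sum_(i < n) k i)%N = m).

Let ks := map k (enum 'I_n).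

Lemma nthk (i : 'I_n) : nth 0%N ks i = k i.
Proof. by rewrite /ks (nth_map i) ?size_enum_ord // nth_ord_enum. Qed.

Lemma size_ks : size ks = n.
Proof. by rewrite /ks size_map size_enum_ord. Qed.

Lemma cpos_ks i : cpos k i = sumn (take i ks).
Proof.
rewrite sumn_take_big /cpos (big_nat_widen _ _ n) ?(ltnW (ltn_ord i)) //.
by rewrite big_mkord; apply: eq_big => // j _; rewrite nthk.
Qed.

Lemma ksum : (\sum_(i < n) k i)%N = (\sum_(0 <= t < n) nth 0 ks t)%N.
Proof. by rewrite big_mkord; apply: eq_bigr => j _; rewrite nthk. Qed.

Lemma ck_le i : (cpos k i + k i <= m)%N.
Proof.
rewrite cpos_ks sumn_take_big -nthk -big_nat_recr //= -hsum ksum.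
by rewrite [X in (_ <= X)%N](big_cat_nat (n := i.+1)) ?leq_addr // ltn_ord.
Qed.

Definition Lb (i : 'I_n) := \sum_(j < m | (cpos k i <= j < cpos k i + k i)%N) s j.
Definition Tb (i : 'I_n) := \sum_(j < m | (j < k i)%N) s j.

Lemma U_bounds (Q : 'I_n -> {perm 'I_m}) i :
  Lb i <= utility s k Q i /\ utility s k Q i <= Tb i.
Proof.
rewrite /utility.
have hi : (i < size [seq (Q a, k a) | a <- enum 'I_n])%N.
  by rewrite size_map size_enum_ord.
have [A [eA hA]] := @alloc_nth m _ setT _ hi.
rewrite eA (nth_map i) ?size_enum_ord // nth_ord_enum /=.
rewrite -map_comp setTD -/ks -cpos_ks in hA.
split; first exact: pick_low sv spos _ _ _ _ hA (ck_le i).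
exact: pick_up.
Qed.

Lemma Lb_ge0 i : 0 <= Lb i.
Proof. by apply: sumr_ge0 => j _; apply: ltW. Qed.

Lemma Tb_ge0 i : 0 <= Tb i.
Proof. by apply: sumr_ge0 => j _; apply: ltW. Qed.

Lemma Lb_pos i : (0 < k i)%N -> 0 < Lb i.
Proof.
move=> hk; rewrite /Lb (@convL _ _ s _ _ (ck_le i)).
have hc : (cpos k i < m)%N by have := ck_le i; lia.
case: (k i) hk => // k' _; rewrite addnS big_nat_recl ?leq_addr //.
apply: (@lt_le_trans _ _ (S s (cpos k i))).
  by change (0 < S s (val (Ordinal hc))); rewrite S_val.
by rewrite lerDl sumr_ge0 // => t _; apply: S_ge0.
Qed.

Lemma Lb0 i : Lb i = 0 -> Tb i = 0.
Proof.
move=> h; case: (posnP (k i)) => hk.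
  by rewrite /Tb big_pred0 // => j; rewrite hk ltn0.
by have := Lb_pos i hk; rewrite h ltxx.
Qed.

Lemma Tb_le i : Tb i <= \sum_(j < m) s j.
Proof.
rewrite /Tb [X in _ <= X](bigID (fun j : 'I_m => (j < k i)%N)) /=.
by rewrite lerDl sumr_ge0 // => j _; apply: ltW.
Qed.

Lemma sumL : \sum_(i < n) Lb i = \sum_(j < m) s j.
Proof.
transitivity (\sum_(i < n) \sum_(cpos k i <= t < (cpos k i + k i)%N) S s t).
  by apply: eq_bigr => i _; rewrite /Lb convL // ck_le.
rewrite (_ : \sum_(j < m) s j = \sum_(0 <= j < sumn ks) S s j); last first.
  have hks : sumn ks = m by rewrite sumnE /ks big_map big_enum -hsum.
  by rewrite hks big_mkord; apply: eq_bigr => j _; rewrite S_val.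
rewrite -part size_ks big_mkord; apply: eq_bigr => i _.
by rewrite -cpos_ks nthk.
Qed.

End Model.

Theorem mainTheorem8 (R : realFieldType) (n m : nat) (s : 'I_m -> R)
  (k : 'I_n -> nat) (P : 'I_n -> {perm 'I_m}) :
  (0 < n)%N ->
  scoring_vector s ->
  (forall j, 0 < s j) ->
  (\sum_(i < n) k i)%N = m ->
  let kmin := seqminn [seq k i | i <- enum 'I_n] in
  [/\ price_AtoP (fun Q => SW_u s k Q) P <=
        (\sum_(i < n) \sum_(j < m | (j < k i)%N) s j) / (\sum_(j < m) s j),
      price_AtoP (fun Q => SW_e s k Q) P <=
        (\sum_(j < m | (j < kmin)%N) s j) /
        seqmin [seq \sum_(j < m | (cpos k i <= j < cpos k i + k i)%N) s j
               | i <- enum 'I_n]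
    & price_AtoP (fun Q => SW_n s k Q) P <=
        (\prod_(i < n) \sum_(j < m | (j < k i)%N) s j) /
        (\prod_(i < n) \sum_(j < m | (cpos k i <= j < cpos k i + k i)%N) s j)].
Proof.
move=> n0 sv spos hsum kmin.
have UB := U_bounds R n m s k sv spos hsum.
have h1 : (1%g : {perm 'I_n}) \in enum {perm 'I_n} by rewrite mem_enum.
have Lge0 := Lb_ge0 R n m s k spos.
have Tge0 := Tb_ge0 R n m s k spos.
set i0 : 'I_n := Ordinal n0.
have hi0 : i0 \in enum 'I_n by rewrite mem_enum.
split.
- rewrite /price_AtoP; apply: (price_le R _ _ _ _ (map_f (fun pi => SW_u s k (permute_profile P pi)) h1)).
  + move=> v /mapP[pi _ ->]; rewrite /SW_u; apply/andP; split.
      rewrite -(sumL R n m s k hsum); apply: ler_sum => i _; exact: (UB _ i).1.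
    apply: ler_sum => i _; exact: (UB _ i).2.
  + by apply: sumr_ge0 => j _; apply: ltW.
  + move=> h0; apply: big1 => i _; apply/eqP.
    have := Tb_le R n m s k spos i; rewrite h0 => h.
    by rewrite eq_le h; have := Tge0 i.
- have : kmin \in [seq k i | i <- enum 'I_n].
    apply: seqminn_mem; rewrite -size_eq0 size_map size_enum_ord -lt0n //.
  case/mapP => ist _ eki.
  rewrite /price_AtoP; apply: (price_le R _ _ _ _ (map_f (fun pi => SW_e s k (permute_profile P pi)) h1)).
  + move=> v /mapP[pi _ ->]; rewrite /SW_e; apply/andP; split.
      apply: (seqmin_ge _ _ _ _ (map_f _ hi0)) => x /mapP[i _ ->].
      apply: le_trans (UB _ i).1.
      by apply: seqmin_le; apply: (map_f (fun i => Lb R n m s k i)); rewrite mem_enum.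
    apply: (@le_trans _ _ (utility s k (permute_profile P pi) ist)).
      by apply: seqmin_le; apply: map_f; rewrite mem_enum.
    by apply: le_trans (UB _ ist).2 _; rewrite /Tb -eki.
  + apply: (seqmin_ge _ _ _ _ (map_f _ hi0)) => x /mapP[i _ ->]; exact: Lge0.
  + move=> h0.
    have := seqmin_mem R _ _ (map_f (fun i => Lb R n m s k i) hi0).
    case/mapP => i _ ei.
    case: (posnP (k i)) => hk.
      have : kmin = 0%N.
        apply/eqP; rewrite -leqn0 -hk; apply: seqminn_le.
        by apply: map_f; rewrite mem_enum.
      by move=> kz; apply: big_pred0 => j; rewrite kz ltn0.
    have := Lb_pos R n m s k spos hsum i hk.
    by rewrite -ei h0 ltxx.
- rewrite /price_AtoP; apply: (price_le R _ _ _ _ (map_f (fun pi => SW_n s k (permute_profile P pi)) h1)).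
  + move=> v /mapP[pi _ ->]; rewrite /SW_n; apply/andP; split.
      apply: ler_prod => i _; rewrite Lge0; exact: (UB _ i).1.
    apply: ler_prod => i _; rewrite (UB _ i).2 andbT.
    exact: le_trans (Lge0 i) (UB _ i).1.
  + by apply: prodr_ge0 => i _; apply: Lge0.
  + move/eqP/prodf_eq0 => [i _ /eqP hi].
    rewrite (bigD1 i) //=; have := Lb0 R n m s k spos hsum i hi; rewrite /Tb => ->.
    by rewrite mul0r.
Qed.
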